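(* Let $\tau:\mathbb{F}_p((t))^d\to\mathbb{F}_p((t))^d$, $(f_1,\dots,f_d)\mapsto(tf_1,\dots,tf_d)$, and let $\phi:\mathbb{F}_p((t))\to\mathrm{Aut}(\mathbb{F}_p((t))^d)$ be a continuous homomorphism satisfying $\phi(tf)=\tau\circ\phi(f)\circ\tau^{-1}$ for all $f$. Assume that $\phi(f)(\mathbb{F}_p[[t]]^d)=\mathbb{F}_p[[t]]^d$ for every $f\in\mathbb{F}_p[[t]]$. Then there are sequences of integers $(a_m)_{m\in\mathbb{N}}$ with $a_0=0$ (which may be taken non-increasing) and $(b_i)_{i\in\mathbb{N}}$ (which may be taken non-decreasing) such that for all $f\in\mathbb{F}_p[[t]]$, $$\pi_i\circ(\phi(f)-\mathrm{Id})|_{\mathbb{V}_j}=0\quad\text{for all } i,j\in\mathbb{Z} \text{ with } \begin{cases} j>i-m, & \text{if } i<a_m \ (\text{for some } m\in\mathbb{N}),\\ j>i+b_i, & \text{if } i\ge 0.\end{cases}$$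
   Context: $\mathbb{N}$ includes $0$. $\mathrm{Aut}(\mathbb{F}_p((t))^d)$ is the group of automorphisms of the topological group $(\mathbb{F}_p((t))^d,+)$ with the Braconnier topology (basis of identity neighbourhoods $\{\alpha:\alpha(x)-x\in U,\ \alpha^{-1}(x)-x\in U\ \forall x\in K\}$, $K$ compact, $U$ an identity neighbourhood). For $n\in\mathbb{Z}$, $\mathbb{V}_n=\{(a_1t^n,\dots,a_dt^n):a_r\in\mathbb{F}_p\}$ and $\pi_n:\mathbb{F}_p((t))^d\to\mathbb{V}_n$ is the projection taking $t^n$-coefficients of each coordinate. *)

(* Defs.v *)
From mathcomp Require Import all_boot all_order all_algebra.
Set Implicit Arguments. Unset Strict Implicit. Unset Printing Implicit Defensive.
Import Order.TTheory GRing.Theory Num.Theory.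
Local Open Scope ring_scope.

(* Laurent series over F_p: coefficient functions int -> 'F_p whose support
   is bounded below.  lcoef f n = coefficient of t^n. *)
Definition laurent_pred (p : nat) (f : int -> 'F_p) : Prop :=
  exists N : int, forall n : int, n < N -> f n = 0.

Definition laurent (p : nat) := {f : int -> 'F_p | laurent_pred f}.

Definition lcoef (p : nat) (f : laurent p) : int -> 'F_p := proj1_sig f.

Lemma laurent_pred_add (p : nat) (f g : laurent p) :
  laurent_pred (fun n => lcoef f n + lcoef g n).
Proof.
case: f => f [N hN]; case: g => g [M hM]; exists (Num.min N M) => n hn /=.
move: hn; rewrite lt_min => /andP[h1 h2]; by rewrite hN ?hM ?addr0.
Qed.

Lemma laurent_pred_opp (p : nat) (f : laurent p) :
  laurent_pred (fun n => - lcoef f n).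
Proof. case: f => f [N hN]; exists N => n hn /=; by rewrite hN ?oppr0. Qed.

Lemma laurent_pred_shift (p : nat) (f : laurent p) (k : int) :
  laurent_pred (fun n => lcoef f (n - k)).
Proof.
case: f => f [N hN]; exists (N + k) => n hn /=; apply: hN.
by rewrite ltrBlDr.
Qed.

Definition ladd (p : nat) (f g : laurent p) : laurent p :=
  exist _ _ (laurent_pred_add f g).
Definition lopp (p : nat) (f : laurent p) : laurent p :=
  exist _ _ (laurent_pred_opp f).
Definition lsub (p : nat) (f g : laurent p) : laurent p := ladd f (lopp g).

(* multiplication by t^k :  coefficient of t^n in t^k f is that of t^(n-k) in f *)
Definition lshiftk (p : nat) (k : int) (f : laurent p) : laurent p :=
  exist _ _ (laurent_pred_shift f k).
Definition lmulX (p : nat) (f : laurent p) : laurent p := lshiftk 1 f.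

Definition lpower (p : nat) (f : laurent p) : Prop :=
  forall n : int, n < 0 -> lcoef f n = 0.

Definition vec (p d : nat) := 'I_d -> laurent p.

Definition vadd (p d : nat) (x y : vec p d) : vec p d := fun r => ladd (x r) (y r).
Definition vsub (p d : nat) (x y : vec p d) : vec p d := fun r => lsub (x r) (y r).

Definition tau {p d : nat} (x : vec p d) : vec p d := fun r => lshiftk 1 (x r).
Definition tauinv {p d : nat} (x : vec p d) : vec p d := fun r => lshiftk (-1) (x r).

Definition vpower (p d : nat) (x : vec p d) : Prop := forall r, lpower (x r).

(* t-adic topology on F_p((t))^d : x and y agree below t^n *)
Definition vagree (p d : nat) (n : int) (x y : vec p d) : Prop :=
  forall r (k : int), k < n -> lcoef (x r) k = lcoef (y r) k.

Definition vopen (p d : nat) (O : vec p d -> Prop) : Prop :=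
  forall x, O x -> exists n : int, forall y, vagree n x y -> O y.

Definition vcompact (p d : nat) (K : vec p d -> Prop) : Prop :=
  forall (I : Type) (O : I -> vec p d -> Prop),
    (forall i, vopen (O i)) -> (forall x, K x -> exists i, O i x) ->
    exists (n : nat) (g : 'I_n -> I), forall x, K x -> exists j, O (g j) x.

Definition vnbhd0 (p d : nat) (U : vec p d -> Prop) : Prop :=
  exists n : int, forall y, (forall r (k : int), k < n -> lcoef (y r) k = 0) -> U y.

Definition vcont (p d : nat) (a : vec p d -> vec p d) : Prop :=
  forall x (n : int), exists m : int, forall y, vagree m x y -> vagree n (a x) (a y).

Definition isAut (p d : nat) (a : vec p d -> vec p d) : Prop :=
  (forall x y, a (vadd x y) = vadd (a x) (a y)) /\
  exists b, cancel a b /\ cancel b a /\ vcont a /\ vcont b.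

(* basic Braconnier identity neighbourhood N(K,U) *)
Definition braconnier_nbhd (p d : nat) (K U : vec p d -> Prop)
    (g : vec p d -> vec p d) : Prop :=
  isAut g /\ exists gi, cancel g gi /\ cancel gi g /\
    forall x, K x -> U (vsub (g x) x) /\ U (vsub (gi x) x).

(* continuity of phi : F_p((t)) -> Aut(F_p((t))^d) (Braconnier topology):
   for every f0 and every basic neighbourhood N(K,U) . phi f0 of phi f0 there
   is a t-adic ball around f0 mapped into it. *)
Definition phi_continuous (p d : nat) (phi : laurent p -> vec p d -> vec p d) : Prop :=
  forall (f0 : laurent p) (K U : vec p d -> Prop), vcompact K -> vnbhd0 U ->
    exists m : int, forall f : laurent p,
      (forall n : int, n < m -> lcoef f n = lcoef f0 n) ->
      exists g, braconnier_nbhd K U g /\ phi f = g \o phi f0.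

Definition inV (p d : nat) (j : int) (v : vec p d) : Prop :=
  forall r (n : int), n != j -> lcoef (v r) n = 0.

Definition killed (p d : nat) (a : vec p d -> vec p d) (i j : int) : Prop :=
  forall v, inV j v -> forall r, lcoef (vsub (a v) v r) i = 0.

(* Main.v *)
Require Import Defs.
From mathcomp Require Import all_boot all_order all_algebra.
From mathcomp Require Import zify.
From Stdlib Require Import FunctionalExtensionality ProofIrrelevance ClassicalEpsilon.
Set Implicit Arguments. Unset Strict Implicit. Unset Printing Implicit Defensive.
Import Order.TTheory GRing.Theory Num.Theory.
Local Open Scope ring_scope.

Lemma laurent_eq p (f g : laurent p) : (forall n, lcoef f n = lcoef g n) -> f = g.
Proof.
case: f => f hf; case: g => g hg /= H.
have E : f = g by apply: functional_extensionality.
subst g; congr exist; apply: proof_irrelevance.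
Qed.

Lemma vec_eq p d (x y : vec p d) : (forall r n, lcoef (x r) n = lcoef (y r) n) -> x = y.
Proof. move=> H; apply: functional_extensionality => r; apply: laurent_eq; exact: H. Qed.

Lemma lconst_pred p (c : 'F_p) : laurent_pred (fun n : int => if n == 0 then c else 0).
Proof. exists 0 => n hn /=; rewrite ifF //; lia. Qed.
Definition lconst p (c : 'F_p) : laurent p := exist _ _ (lconst_pred c).

Lemma ltail_pred p (f : laurent p) :
  laurent_pred (fun n : int => if n < 0 then 0 else lcoef f (n + 1)).
Proof. exists 0 => n hn /=; by rewrite hn. Qed.
Definition ltail p (f : laurent p) : laurent p := exist _ _ (ltail_pred f).

Definition shiftv p d (s : int) (x : vec p d) : vec p d := fun r => lshiftk s (x r).

Definition vlow p d (n : int) (x : vec p d) : Prop :=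
  forall r (k : int), k < n -> lcoef (x r) k = 0.

Lemma fin_unif (T : finType) (P : T -> int -> Prop) :
  (forall c m m', m <= m' -> P c m -> P c m') ->
  (forall c, exists m, P c m) -> exists m, forall c, P c m.
Proof.
move=> mon H.
suff [m Hm] : exists m, forall c, c \in enum T -> P c m.
  by exists m => c; apply: Hm; rewrite mem_enum.
elim: (enum T) => [|c s [m Hm]]; first by exists 0.
have [mc Hc] := H c.
exists (Num.max mc m) => c'; rewrite inE => /orP[/eqP ->|cs].
  by apply: (mon _ mc) => //; lia.
by apply: (mon _ m); [lia | exact: Hm].
Qed.

Lemma vcompact1 p d (w : vec p d) : vcompact (fun x => x = w).
Proof. move=> I O _ cov; have [i Hi] := cov w erefl. exists 1%N, (fun _ => i) => x ->. by exists ord0. Qed.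

Lemma decomp p (f : laurent p) : lpower f ->
  f = ladd (lmulX (ltail f)) (lconst (lcoef f 0)).
Proof.
move=> hf; apply: laurent_eq => n /=.
case: (ltrgtP n 0) => hn.
- have -> : (n - 1 < 0) = true by lia.
  by rewrite hf // addr0.
- have -> : (n - 1 < 0) = false by lia.
  by rewrite addr0 subrK.
- subst n; by rewrite add0r.
Qed.

Lemma aut_zero p d (a : vec p d -> vec p d) : isAut a ->
  forall r k, lcoef (a (fun _ => lconst 0) r) k = 0.
Proof.
move=> [hadd _] r k.
set z := (fun _ => lconst 0) : vec p d.
have E : vadd z z = z by apply: vec_eq => r' n /=; case: (n == 0); rewrite addr0.
have := hadd z z; rewrite E => /(congr1 (fun x => lcoef (x r) k)) /= h.
by move: h; rewrite -{1}(addr0 (lcoef (a z r) k)) => /addrI <-.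
Qed.


Lemma phi_conj p d (phi : laurent p -> vec p d -> vec p d)
  (hX : forall f, phi (lmulX f) = tau \o phi f \o tauinv) (n : nat) g x :
  phi (lshiftk n%:Z g) x = shiftv n%:Z (phi g (shiftv (- n%:Z) x)).
Proof.
elim: n x => [|n IH] x.
  have -> : lshiftk 0 g = g by apply: laurent_eq => k /=; rewrite subr0.
  have E1 : forall s : int, s = 0 -> forall y : vec p d, shiftv s y = y.
    by move=> s -> y; apply: vec_eq => r k /=; rewrite subr0.
  by rewrite !E1 //; lia.
have -> : lshiftk (n.+1)%:Z g = lmulX (lshiftk n%:Z g).
  by apply: laurent_eq => k /=; congr (lcoef _ _); lia.
rewrite hX /= IH; apply: vec_eq => r k /=.
have -> : shiftv (- n%:Z) (tauinv x) = shiftv (- (n.+1)%:Z) x.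
  by apply: vec_eq => r' k' /=; congr (lcoef _ _); lia.
congr (lcoef _ _); lia.
Qed.

Lemma phi_conj_coef p d (phi : laurent p -> vec p d -> vec p d)
  (hX : forall f, phi (lmulX f) = tau \o phi f \o tauinv) (n : nat) f x r k :
  lcoef (phi f x r) k = lcoef (phi (lshiftk n%:Z f) (shiftv n%:Z x) r) (k + n%:Z).
Proof.
rewrite phi_conj //=.
have -> : shiftv (- n%:Z) (shiftv n%:Z x) = x.
  by apply: vec_eq => r' k' /=; congr (lcoef _ _); lia.
by congr (lcoef _ _); lia.
Qed.

Lemma claim_b p d (phi : laurent p -> vec p d -> vec p d)
  (hAut : forall f, isAut (phi f))
  (hadd : forall f g, phi (ladd f g) = phi f \o phi g)
  (hX : forall f, phi (lmulX f) = tau \o phi f \o tauinv)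
  (hpow : forall f, lpower f ->
     (forall x, vpower x -> vpower (phi f x)) /\
     (forall y, vpower y -> exists x, vpower x /\ phi f x = y)) (n : nat) :
  exists J : int, 0 <= J /\ forall f, lpower f -> forall x, vlow J x -> vlow n%:Z (phi f x).
Proof.
elim: n => [|n [J [J0 IH]]].
  exists 0; split=> // f hf x hx r k hk.
  have hv : vpower x by move=> r' k' hk'; exact: hx.
  exact: ((hpow f hf).1 x hv r k hk).
have [M HM] : exists M, forall c : 'F_p, forall y, vlow M y -> vlow (J + 1) (phi (lconst c) y).
  apply: fin_unif.
    by move=> c m m' hm H y hy; apply: H => r k hk; apply: hy; lia.
  move=> c; have [_ [b [_ [_ [hc _]]]]] := hAut (lconst c).
  have [m Hm] := hc (fun _ => lconst 0) (J + 1).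
  exists m => y hy r k hk.
  have hv : vagree m (fun _ => lconst 0) y.
    by move=> r' k' hk'; rewrite /= hy //; case: (k' == 0).
  have := Hm y hv r k hk.
  by rewrite aut_zero // => h; rewrite -h.
exists (Num.max M 0); split; first lia.
move=> f hf x hx.
rewrite (decomp hf) hadd hX /=.
set y := phi (lconst (lcoef f 0)) x.
have hy : vlow (J + 1) y by apply: HM => r k hk; apply: hx; lia.
have ht : lpower (ltail f) by move=> k hk /=; rewrite hk.
have := IH _ ht (tauinv y) _.
move=> H r k hk /=; apply: H; last lia.
by move=> r' k' hk' /=; apply: hy; lia.
Qed.

Lemma gen_fact p d (phi : laurent p -> vec p d -> vec p d)
  (hX : forall f, phi (lmulX f) = tau \o phi f \o tauinv)
  (hpow : forall f, lpower f ->
     (forall x, vpower x -> vpower (phi f x)) /\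
     (forall y, vpower y -> exists x, vpower x /\ phi f x = y))
  f (hf : lpower f) (i j : int) (v : vec p d) r :
  i < 0 -> i < j -> inV j v -> lcoef (phi f v r) i = 0.
Proof.
move=> hi hij hv.
case: (leP 0 j) => hj.
  have hvp : vpower v by move=> r' k hk; apply: hv; lia.
  exact: ((hpow f hf).1 v hvp r i hi).
have [n hn] : exists n : nat, j = - n%:Z by exists `|j|%N; lia.
rewrite (phi_conj_coef hX n).
have hg : lpower (lshiftk n%:Z f) by move=> k hk /=; apply: hf; lia.
have hw : vpower (shiftv n%:Z v) by move=> r' k hk /=; apply: hv; lia.
apply: ((hpow _ hg).1 _ hw r); lia.
Qed.

Lemma claim_a p d (phi : laurent p -> vec p d -> vec p d)
  (hAut : forall f, isAut (phi f))
  (hadd : forall f g, phi (ladd f g) = phi f \o phi g)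
  (hcont : phi_continuous phi)
  (hX : forall f, phi (lmulX f) = tau \o phi f \o tauinv)
  (hpow : forall f, lpower f ->
     (forall x, vpower x -> vpower (phi f x)) /\
     (forall y, vpower y -> exists x, vpower x /\ phi f x = y)) (m : nat) :
  exists A : int, A <= 0 /\ forall f, lpower f -> forall i j : int,
     i < A -> i - m%:Z < j -> killed (phi f) i j.
Proof.
set Z := lconst (0 : 'F_p).
have hZ : forall x, phi Z x = x.
  move=> x; have [_ [b [hb _]]] := hAut Z.
  have E : ladd Z Z = Z by apply: laurent_eq => n /=; case: (n == 0); rewrite addr0.
  have := hadd Z Z; rewrite E => /(congr1 (fun F => F x)) /= h.
  by rewrite -{2}(hb x) {2}h hb.
pose e (a : {ffun 'I_d -> 'F_p}) : vec p d := fun r => lconst (a r).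
have [N HN] : exists N, forall a, forall f, (forall n, n < N -> lcoef f n = 0) ->
    forall r k, k < m%:Z -> lcoef (phi f (e a) r) k = lcoef (e a r) k.
  apply: fin_unif.
    by move=> a N N' hN H f hf; apply: H => n hn; apply: hf; lia.
  move=> a.
  have hU : vnbhd0 (vlow (p:=p) (d:=d) m%:Z) by exists m%:Z.
  have [m0 Hm0] := hcont Z _ _ (@vcompact1 _ _ (e a)) hU.
  exists m0 => f hf r k hk.
  have [g [[_ [gi [_ [_ hK]]]] ->]] : exists g, braconnier_nbhd (fun x => x = e a) (vlow m%:Z) g /\
      phi f = g \o phi Z.
    by apply: Hm0 => n hn; rewrite hf //=; case: (n == 0).
  rewrite /= hZ.
  have := (hK (e a) erefl).1 r k hk.
  by rewrite /vsub /= => /eqP; rewrite subr_eq0 => /eqP.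
exists (Num.min 0 (- N)); split; first lia.
move=> f hf i j hi hij v hv r.
rewrite /vsub /= ; apply/eqP; rewrite subr_eq0; apply/eqP.
case: (ltP i j) => hij'.
  have hi0 : i < 0 by lia.
  by rewrite (gen_fact hX hpow hf r hi0 hij' hv) hv //; lia.
have [n hn] : exists n : nat, j = - n%:Z by exists `|j|%N; lia.
rewrite (phi_conj_coef hX n).
pose a : {ffun 'I_d -> 'F_p} := [ffun r => lcoef (shiftv n%:Z v r) 0].
have Ew : shiftv n%:Z v = e a.
  apply: vec_eq => r' k /=; rewrite ffunE /=.
  case: eqP => [->|hk]; first by [].
  apply: hv; lia.
rewrite Ew HN; last lia.
  by rewrite -Ew /=; congr (lcoef _ _); lia.
by move=> k hk /=; apply: hf; lia.
Qed.

Theorem mainTheorem13 (p d : nat) (hp : prime p)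
    (phi : laurent p -> vec p d -> vec p d) :
  (forall f, isAut (phi f)) ->
  (forall f g, phi (ladd f g) = phi f \o phi g) ->
  phi_continuous phi ->
  (forall f, phi (lmulX f) = tau \o phi f \o tauinv) ->
  (forall f, lpower f ->
     (forall x, vpower x -> vpower (phi f x)) /\
     (forall y, vpower y -> exists x, vpower x /\ phi f x = y)) ->
  exists a b : nat -> int,
    a 0%N = 0 /\ (forall m : nat, a m.+1 <= a m) /\
    (forall k : nat, b k <= b k.+1) /\
    forall f, lpower f ->
      (forall (m : nat) (i j : int), i < a m -> i - m%:Z < j -> killed (phi f) i j) /\
      (forall (k : nat) (j : int), k%:Z + b k < j -> killed (phi f) k%:Z j).
Proof.
move=> hAut hadd hcont hX hpow.
pose A m := proj1_sig (constructive_indefinite_description _ (claim_a hAut hadd hcont hX hpow m)).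
have HA m : A m <= 0 /\ forall f, lpower f -> forall i j : int,
     i < A m -> i - m%:Z < j -> killed (phi f) i j.
  exact: (proj2_sig (constructive_indefinite_description _ (claim_a hAut hadd hcont hX hpow m))).
pose B k := proj1_sig (constructive_indefinite_description _ (claim_b hAut hadd hX hpow k.+1)).
have HB k : 0 <= B k /\ forall f, lpower f -> forall x, vlow (B k) x -> vlow (k.+1)%:Z (phi f x).
  exact: (proj2_sig (constructive_indefinite_description _ (claim_b hAut hadd hX hpow k.+1))).
pose a := fix a (m : nat) : int := if m is m'.+1 then Num.min (a m') (A m) else 0.
pose b := fix b (k : nat) : int := if k is k'.+1 then Num.max (b k') (B k) else B 0%N.
have hbB k : B k <= b k by case: k => [|k] /=; lia.
exists a, b; split; first by [].
split; first by move=> m /=; lia.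
split; first by move=> k /=; lia.
move=> f hf; split.
  move=> m i j hi hij.
  case: m hi hij => [|m] hi hij.
    move=> v hv r; rewrite /vsub /=; apply/eqP; rewrite subr_eq0; apply/eqP.
    have hi0 : (i < 0) by exact: hi.
    have hij' : i < j by lia.
    by rewrite (gen_fact hX hpow hf r hi0 hij' hv) hv //; lia.
  apply: ((HA m.+1).2 f hf i j _ hij).
  have : a m.+1 <= A m.+1 by rewrite /=; lia.
  lia.
move=> k j hj v hv r; rewrite /vsub /=; apply/eqP; rewrite subr_eq0; apply/eqP.
have hB := hbB k.
have hvl : vlow (B k) v by move=> r' k' hk'; apply: hv; have := (HB k).1; lia.
rewrite ((HB k).2 f hf v hvl r k%:Z); last lia.
have hB0 := (HB k).1.
rewrite hv //; lia.
Qed.
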